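(* Let $n\ge1$, let $s_1,\dots,s_n\in\mathbb R$ be distinct, and let $a,\rho_0,S,K_j,M_j$ ($1\le j\le n$) be positive constants. For $\zeta\in\mathbb C\setminus i\mathbb R$ let $\Gamma(\zeta)$ be the $n\times n$ matrix $$\Gamma(\zeta)_{ij}=-\zeta\Big(\pm\frac{e^{\mp\zeta|s_i-s_j|/a}}{2a\rho_0\zeta}+\frac{S\delta_{ij}}{K_j+\zeta^2M_j}\Big),\qquad \pm\mathrm{Re}\,\zeta>0.$$ Then for every $\lambda\in i\mathbb R\setminus\{0\}$ the matrices $$\Gamma_\pm(\lambda)^{-1}:=\lim_{\varepsilon\downarrow0}\Gamma(\lambda\pm\varepsilon)^{-1}$$ are well defined. *)

(* Defs.v *)
From HB Require Import structures.
From mathcomp Require Import all_boot all_order all_algebra.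
From mathcomp Require Import complex.
From mathcomp Require Import all_classical all_reals all_analysis.
Set Implicit Arguments. Unset Strict Implicit. Unset Printing Implicit Defensive.
Import Order.TTheory GRing.Theory Num.Theory.
Import numFieldNormedType.Exports.
Local Open Scope ring_scope.
Local Open Scope classical_set_scope.

Definition rc {R : realType} (x : R) : R[i] := Complex x 0.

Definition cexp {R : realType} (z : R[i]) : R[i] :=
  rc (expR (complex.Re z)) * Complex (cos (complex.Im z)) (sin (complex.Im z)).

(* The matrix Gamma(zeta), for Re zeta <> 0; the sign "±" is + when Re zeta > 0
   and - when Re zeta < 0 (the value for Re zeta = 0 is irrelevant). *)
Definition Gamma {R : realType} (n : nat) (s : 'I_n -> R) (a rho0 S : R)
  (K M : 'I_n -> R) (zeta : R[i]) : 'M[R[i]]_n :=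
  let sg : R[i] := if 0 < complex.Re zeta then 1 else -1 in
  \matrix_(i, j)
    (- zeta * (sg * cexp (- sg * zeta * rc (`|s i - s j| / a))
                  / (rc (2 * a * rho0) * zeta)
               + rc S * (i == j)%:R / (rc (K j) + zeta ^+ 2 * rc (M j)))).

Definition inv_limit_exists {R : realType} (n : nat) (G : R -> 'M[R[i]]_n) : Prop :=
  (\forall e \near 0^'+, G e \in unitmx) /\
  exists L : 'M[R[i]]_n, forall i j,
    ((fun e => complex.Re (invmx (G e) i j)) @ 0^'+ --> complex.Re (L i j)) /\
    ((fun e => complex.Im (invmx (G e) i j)) @ 0^'+ --> complex.Im (L i j)).

(* Main.v *)
Set Warnings "-all".
Set Implicit Arguments. Unset Strict Implicit. Unset Printing Implicit Defensive.
Require Import Defs.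
From HB Require Import structures.
From mathcomp Require Import all_boot all_order all_algebra.
From mathcomp Require Import complex.
From mathcomp Require Import all_classical all_reals all_analysis.
Import Order.TTheory GRing.Theory Num.Theory.
Import numFieldNormedType.Exports.
Local Open Scope ring_scope.
Local Open Scope classical_set_scope.
From mathcomp Require Import ring lra.
Lemma ReD (R : realType) (x y : R[i]) : complex.Re (x + y) = complex.Re x + complex.Re y.
Proof. by case: x; case: y. Qed.
Lemma ImD (R : realType) (x y : R[i]) : complex.Im (x + y) = complex.Im x + complex.Im y.
Proof. by case: x; case: y. Qed.
Lemma ReN (R : realType) (x : R[i]) : complex.Re (- x) = - complex.Re x.
Proof. by case: x. Qed.
Lemma ImN (R : realType) (x : R[i]) : complex.Im (- x) = - complex.Im x.
Proof. by case: x. Qed.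
Lemma ReM (R : realType) (x y : R[i]) :
  complex.Re (x * y) = complex.Re x * complex.Re y - complex.Im x * complex.Im y.
Proof. by case: x; case: y. Qed.
Lemma ImM (R : realType) (x y : R[i]) :
  complex.Im (x * y) = complex.Re x * complex.Im y + complex.Im x * complex.Re y.
Proof. by case: x; case: y. Qed.
Lemma ReV (R : realType) (x : R[i]) :
  complex.Re (x^-1) = complex.Re x / (complex.Re x ^+ 2 + complex.Im x ^+ 2).
Proof. by case: x. Qed.
Lemma ImV (R : realType) (x : R[i]) :
  complex.Im (x^-1) = - (complex.Im x / (complex.Re x ^+ 2 + complex.Im x ^+ 2)).
Proof. by case: x. Qed.

Definition cc (R : realType) (f : R -> R[i]) (z : R[i]) :=
  (complex.Re (f e) @[e --> (0:R)^'+] --> complex.Re z) /\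
  (complex.Im (f e) @[e --> (0:R)^'+] --> complex.Im z).

Lemma cc_ext (R : realType) (f g : R -> R[i]) z :
  (forall e, f e = g e) -> cc f z -> cc g z.
Proof.
move=> fg [h1 h2]; split.
  by apply: (cvg_trans _ h1); apply: near_eq_cvg; near=> e; rewrite fg.
by apply: (cvg_trans _ h2); apply: near_eq_cvg; near=> e; rewrite fg.
Unshelve. all: by end_near.
Qed.

Lemma cc_cst (R : realType) (z : R[i]) : cc (fun _ => z) z.
Proof. by split; apply: cvg_cst. Qed.

Lemma cc_Complex (R : realType) (g h : R -> R) x y :
  g e @[e --> (0:R)^'+] --> x -> h e @[e --> (0:R)^'+] --> y ->
  cc (fun e => Complex (g e) (h e)) (Complex x y).
Proof. by move=> *; split. Qed.

Lemma cc_add (R : realType) (f g : R -> R[i]) a b :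
  cc f a -> cc g b -> cc (fun e => f e + g e) (a + b).
Proof.
move=> [f1 f2] [g1 g2]; split.
  rewrite ReD; under eq_fun do rewrite ReD; exact: cvgD.
rewrite ImD; under eq_fun do rewrite ImD; exact: cvgD.
Qed.

Lemma cc_opp (R : realType) (f : R -> R[i]) a :
  cc f a -> cc (fun e => - f e) (- a).
Proof.
move=> [f1 f2]; split.
  rewrite ReN; under eq_fun do rewrite ReN; exact: cvgN.
rewrite ImN; under eq_fun do rewrite ImN; exact: cvgN.
Qed.

Lemma cc_mul (R : realType) (f g : R -> R[i]) a b :
  cc f a -> cc g b -> cc (fun e => f e * g e) (a * b).
Proof.
move=> [f1 f2] [g1 g2]; split.
  rewrite ReM; under eq_fun do rewrite ReM; apply: cvgB; exact: cvgM.
rewrite ImM; under eq_fun do rewrite ImM; apply: cvgD; exact: cvgM.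
Qed.

Lemma cc_inv (R : realType) (f : R -> R[i]) a :
  a != 0 -> cc f a -> cc (fun e => (f e)^-1) a^-1.
Proof.
move=> a0 [f1 f2].
have n0 : complex.Re a ^+ 2 + complex.Im a ^+ 2 != 0.
  move: a0; case: a {f1 f2} => x y /=; apply: contra => /eqP h.
  have hx : x ^+ 2 = 0.
    apply/eqP; rewrite eq_le sqr_ge0 andbT -h lerDl sqr_ge0 //.
  have hy : y ^+ 2 = 0 by move: h; rewrite hx add0r.
  by move: hx hy => /eqP; rewrite sqrf_eq0 => /eqP -> /eqP; rewrite sqrf_eq0 => /eqP ->.
have hn : complex.Re (f e) ^+ 2 + complex.Im (f e) ^+ 2 @[e --> (0:R)^'+] -->
   complex.Re a ^+ 2 + complex.Im a ^+ 2.
  by apply: cvgD; rewrite !expr2; apply: cvgM.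
split.
  rewrite ReV; under eq_fun do rewrite ReV; apply: cvgM => //; exact: cvgV.
rewrite ImV; under eq_fun do rewrite ImV; apply: cvgN; apply: cvgM => //; exact: cvgV.
Qed.

Lemma cc_sum (R : realType) (I : Type) (r : seq I) (P : pred I) (F : I -> R -> R[i]) (z : I -> R[i]) :
  (forall i, P i -> cc (F i) (z i)) ->
  cc (fun e => \sum_(i <- r | P i) F i e) (\sum_(i <- r | P i) z i).
Proof.
move=> h; elim: r => [|x r IH].
  rewrite big_nil; apply: cc_ext (cc_cst 0) => e; by rewrite big_nil.
rewrite big_cons; case Px: (P x).
  apply: cc_ext (cc_add (h x Px) IH) => e; by rewrite big_cons Px.
by apply: cc_ext IH => e; rewrite big_cons Px.
Qed.

Lemma cc_prod (R : realType) (I : Type) (r : seq I) (P : pred I) (F : I -> R -> R[i]) (z : I -> R[i]) :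
  (forall i, P i -> cc (F i) (z i)) ->
  cc (fun e => \prod_(i <- r | P i) F i e) (\prod_(i <- r | P i) z i).
Proof.
move=> h; elim: r => [|x r IH].
  rewrite big_nil; apply: cc_ext (cc_cst 1) => e; by rewrite big_nil.
rewrite big_cons; case Px: (P x).
  apply: cc_ext (cc_mul (h x Px) IH) => e; by rewrite big_cons Px.
by apply: cc_ext IH => e; rewrite big_cons Px.
Qed.

Lemma cc_det (R : realType) (m : nat) (A : R -> 'M[R[i]]_m) (L : 'M[R[i]]_m) :
  (forall i j, cc (fun e => A e i j) (L i j)) -> cc (fun e => \det (A e)) (\det L).
Proof.
move=> h; rewrite /determinant; apply: cc_sum => s _.
apply: cc_mul; first exact: cc_cst.
by apply: cc_prod => i _; apply: h.
Qed.

Lemma cc_adj (R : realType) (m : nat) (A : R -> 'M[R[i]]_m) (L : 'M[R[i]]_m) :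
  (forall i j, cc (fun e => A e i j) (L i j)) ->
  forall i j, cc (fun e => \adj (A e) i j) (\adj L i j).
Proof.
move=> h i j; rewrite mxE; under eq_fun do rewrite mxE.
rewrite /cofactor; apply: cc_mul; first exact: cc_cst.
apply: cc_det => k l; rewrite !mxE; under eq_fun do rewrite !mxE; exact: h.
Qed.
Local Notation cj := (@conjc _).

Lemma cjM (R : realType) (x y : R[i]) : cj (x * y) = cj x * cj y.
Proof. by case: x => a b; case: y => c d; apply/eqP; rewrite eq_complex /=; apply/andP; split; apply/eqP; ring. Qed.
Lemma cjD (R : realType) (x y : R[i]) : cj (x + y) = cj x + cj y.
Proof. by case: x => a b; case: y => c d; apply/eqP; rewrite eq_complex /=; apply/andP; split; apply/eqP; ring. Qed.
Lemma cjK (R : realType) (x : R[i]) : cj (cj x) = x.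
Proof. by case: x => a b; rewrite /= opprK. Qed.
Lemma cj_sum (R : realType) (I : Type) (r : seq I) (P : pred I) (F : I -> R[i]) :
  cj (\sum_(i <- r | P i) F i) = \sum_(i <- r | P i) cj (F i).
Proof.
elim: r => [|x r IH]; first by rewrite !big_nil /= oppr0.
by rewrite !big_cons; case: (P x); rewrite ?cjD IH.
Qed.

Lemma cj_real_mul (R : realType) (x : R[i]) : cj x * x = (complex.Re x ^+ 2 + complex.Im x ^+ 2)%:C%C.
Proof. by case: x => a b; apply/eqP; rewrite eq_complex /= !expr2; apply/andP; split; apply/eqP; ring. Qed.

Lemma cj_mul_ge0 (R : realType) (x : R[i]) : 0 <= cj x * x.
Proof. by rewrite mulrC; exact: mulcJ_ge0. Qed.

Lemma cj_mul_eq0 (R : realType) (x : R[i]) : (cj x * x == 0) = (x == 0).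
Proof. by rewrite mulf_eq0 conjc_eq0 orbb. Qed.

Definition zz (R : realType) (k : R) (x : R) : R[i] := Complex (cos (k * x)) (sin (k * x)).

Lemma Esum (R : realType) (k x y : R) (sg : R) :
  Complex (cos (k * `|x - y|)) (sg * sin (k * `|x - y|)) +
  cj (Complex (cos (k * `|x - y|)) (sg * sin (k * `|x - y|)))
  = zz k x * cj (zz k y) + cj (zz k x) * zz k y.
Proof.
have hc : cos (k * `|x - y|) = cos (k * x - k * y).
  have [h|h] := leP y x.
    by rewrite ger0_norm ?subr_ge0 // mulrBr.
  by rewrite ltr0_norm ?subr_lt0 // mulrN -cosN opprK mulrBr.
rewrite /zz /= hc cosB; apply/eqP; rewrite eq_complex /=; apply/andP; split; apply/eqP; ring.
Qed.

Lemma Emin1 (R : realType) (k x y : R) : x <= y ->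
  Complex (cos (k * `|x - y|)) (- sin (k * `|x - y|)) = zz k x * cj (zz k y).
Proof.
move=> h; rewrite ler0_norm ?subr_le0 // opprB /zz mulrBr cosB sinB.
apply/eqP; rewrite eq_complex /=; apply/andP; split; apply/eqP; ring.
Qed.

Lemma Emin2 (R : realType) (k x y : R) : x <= y ->
  Complex (cos (k * `|x - y|)) (sin (k * `|x - y|)) = cj (zz k x) * zz k y.
Proof.
move=> h; rewrite ler0_norm ?subr_le0 // opprB /zz mulrBr cosB sinB.
apply/eqP; rewrite eq_complex /=; apply/andP; split; apply/eqP; ring.
Qed.

Lemma pw_id (R : realType) (wj wi Eji zj zi : R[i]) : Eji + cj Eji = zj * cj zi + cj zj * zi ->
  cj wj * (Eji * wi) + cj wj * cj Eji * wi = cj (cj zj * wj) * (cj zi * wi) + cj (zj * wj) * (zi * wi).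
Proof.
move=> h; rewrite !cjM cjK.
transitivity (cj wj * (Eji + cj Eji) * wi); first ring.
rewrite h; ring.
Qed.

Lemma kernel (R : realType) (n : nat) (s : 'I_n -> R) (k sg : R)
  (hsg : sg = 1 \/ sg = -1) (pc : 'I_n -> R[i]) (hp : forall i, cj (pc i) = pc i)
  (kap : R[i]) (hk : cj kap = - kap) (hk0 : kap != 0) (v : 'I_n -> R[i]) :
  (forall j, \sum_i Complex (cos (k * `|s j - s i|)) (- sg * sin (k * `|s j - s i|))
                 * (pc i * v i) = kap * v j) ->
  forall j, v j = 0.
Proof.
move=> h.
set E := fun j i => Complex (cos (k * `|s j - s i|)) (- sg * sin (k * `|s j - s i|)).
set w := fun i => pc i * v i.
have hE : forall j i, E j i = E i j by move=> j i; rewrite /E distrC.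
set T := \sum_j cj (w j) * \sum_i E j i * w i.
set Q := \sum_j pc j * (cj (v j) * v j).
have TQ : T = kap * Q.
  rewrite /T /Q mulr_sumr; apply: eq_bigr => j _; rewrite h /w cjM hp; ring.
have cQ : cj Q = Q.
  rewrite /Q cj_sum; apply: eq_bigr => j _; rewrite !cjM hp cjK; ring.
have T0 : T + cj T = 0 by rewrite TQ cjM cQ hk mulNr addrN.
set X := \sum_i cj (zz k (s i)) * w i.
set Y := \sum_i zz k (s i) * w i.
have cT : cj T = \sum_j \sum_i cj (w j) * cj (E j i) * w i.
  rewrite /T cj_sum.
  transitivity (\sum_j \sum_i w j * cj (E j i * w i)).
    by apply: eq_bigr => j _; rewrite cjM cjK cj_sum mulr_sumr.
  rewrite exchange_big; apply: eq_bigr => j _; apply: eq_bigr => i _.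
  by rewrite [cj (E i j * _)]cjM (hE i j); ring.
have TXY : T + cj T = cj X * X + cj Y * Y.
  transitivity (\sum_j \sum_i (cj (w j) * (E j i * w i) + cj (w j) * cj (E j i) * w i)).
    rewrite cT /T -big_split; apply: eq_bigr => j _; by rewrite mulr_sumr -big_split.
  transitivity (\sum_j \sum_i (cj (cj (zz k (s j)) * w j) * (cj (zz k (s i)) * w i)
       + cj (zz k (s j) * w j) * (zz k (s i) * w i))); last first.
    rewrite /X /Y !cj_sum !mulr_suml -big_split; apply: eq_bigr => j _.
    by rewrite !mulr_sumr -big_split.
  apply: eq_bigr => j _; apply: eq_bigr => i _.
  rewrite [cj (cj _ * _)]cjM [cj (zz _ _ * _)]cjM cjK.
  transitivity (cj (w j) * (E j i + cj (E j i)) * w i); first ring.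
  rewrite {1 2}/E Esum; ring.
have XY0 : (X == 0) && (Y == 0).
  by rewrite -(cj_mul_eq0 X) -(cj_mul_eq0 Y) -paddr_eq0 ?cj_mul_ge0 // -TXY T0.
case/andP: XY0 => /eqP X0 /eqP Y0.
have w0 : forall j, w j = 0.
  move=> j0; apply/eqP; apply/negP => /negP hj0.
  case: (arg_minP (fun i => s i) (P := fun i => w i != 0) hj0) => m hm hmin.
  have : \sum_i E m i * w i = 0.
    case: hsg => hsg.
      transitivity (zz k (s m) * X); last by rewrite X0 mulr0.
      rewrite /X mulr_sumr; apply: eq_bigr => i _.
      case: (eqVneq (w i) 0) => [->|hi]; first by rewrite !mulr0.
      by rewrite /E hsg mulN1r Emin1 ?mulrA //; apply: hmin.
    transitivity (cj (zz k (s m)) * Y); last by rewrite Y0 mulr0.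
    rewrite /Y mulr_sumr; apply: eq_bigr => i _.
    case: (eqVneq (w i) 0) => [->|hi]; first by rewrite !mulr0.
    by rewrite /E hsg opprK mul1r Emin2 ?mulrA //; apply: hmin.
  rewrite h => /eqP; rewrite mulf_eq0 (negbTE hk0) /= => /eqP vm.
  by move: hm; rewrite /w vm mulr0 eqxx.
move=> j; apply/eqP; move: (h j).
have -> : \sum_i E j i * (pc i * v i) = 0.
  by apply: big1 => i _; have := w0 i; rewrite /w => ->; rewrite mulr0.
by move/esym/eqP; rewrite mulf_eq0 (negbTE hk0).
Qed.

Definition sgR (R : realType) (b : bool) : R := if b then 1 else -1.
Definition sgb (R : realType) (b : bool) : R[i] := if b then 1 else -1.
Definition zeta (R : realType) (t : R) (b : bool) (e : R) : R[i] :=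
  if b then Complex 0 t + rc e else Complex 0 t - rc e.
Definition pz (R : realType) (n : nat) (K M : 'I_n -> R) (t : R) (b : bool) (j : 'I_n) (e : R) : R[i] :=
  rc (K j) + zeta t b e ^+ 2 * rc (M j).
Definition Aent (R : realType) (n : nat) (s : 'I_n -> R) (a rho0 t : R) (b : bool) (e : R) (i j : 'I_n) : R[i] :=
  - sgb R b * cexp (- sgb R b * zeta t b e * rc (`|s i - s j| / a)) / rc (2 * a * rho0).
Definition Hm (R : realType) (n : nat) (s : 'I_n -> R) (a rho0 S : R) (K M : 'I_n -> R) (t : R) (b : bool) (e : R)
  : 'M[R[i]]_n :=
  \matrix_(i, j) (Aent s a rho0 t b e i j * pz K M t b j e + (- zeta t b e * rc S) * (i == j)%:R).

Lemma zetaE (R : realType) (t : R) b e : zeta t b e = Complex (sgR R b * e) t.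
Proof.
by case: b; apply/eqP; rewrite eq_complex /= ?add0r ?addr0 ?subr0 ?mul1r ?mulN1r ?sub0r ?eqxx.
Qed.

Lemma sgbE (R : realType) b : sgb R b = rc (sgR R b).
Proof. by case: b => //; apply/eqP; rewrite eq_complex /= oppr0 !eqxx. Qed.

Lemma rc_neq0 (R : realType) (x : R) : x != 0 -> rc x != 0.
Proof. by move=> hx; apply/eqP => -[] /eqP; rewrite (negbTE hx). Qed.

Lemma zeta_neq0 (R : realType) (t : R) b e : t != 0 -> zeta t b e != 0.
Proof. by move=> ht; rewrite zetaE; apply/eqP => -[] _ /eqP; rewrite (negbTE ht). Qed.

Lemma Im_pz (R : realType) (n : nat) (K M : 'I_n -> R) t b j e :
  complex.Im (pz K M t b j e) = 2 * (sgR R b * e) * t * M j.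
Proof. rewrite /pz zetaE expr2 /=; ring. Qed.

Lemma pz_neq0 (R : realType) (n : nat) (K M : 'I_n -> R) t b j e :
  t != 0 -> 0 < M j -> 0 < e -> pz K M t b j e != 0.
Proof.
move=> ht hM he; apply/eqP => h.
have := Im_pz K M t b j e; rewrite h /= => /esym/eqP.
rewrite !mulf_eq0 (negbTE ht) (gt_eqF hM) (gt_eqF he) /= ?orbF.
by clear h; rewrite pnatr_eq0 /=; case: b; rewrite /sgR ?oppr_eq0 oner_eq0.
Qed.

Lemma Gamma_Hm (R : realType) (n : nat) (s : 'I_n -> R) (a rho0 S : R) (K M : 'I_n -> R) (t : R) b e :
  0 < a -> 0 < rho0 -> t != 0 -> (forall j, 0 < M j) -> 0 < e ->
  Gamma s a rho0 S K M (zeta t b e) =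
  Hm s a rho0 S K M t b e *m diag_mx (\row_j (pz K M t b j e)^-1).
Proof.
move=> ha hr ht hM he.
have sgE : (if 0 < complex.Re (zeta t b e) then 1 else -1) = sgb R b.
  rewrite zetaE /=; case: b; rewrite /sgR /sgb.
    by rewrite mul1r he.
  by rewrite mulN1r oppr_gt0 ltNge (ltW he).
apply/matrixP => i j; rewrite mul_mx_diag !mxE /= sgE.
have hz := zeta_neq0 b e ht.
have hp : pz K M t b j e != 0 by apply: pz_neq0.
have hc : rc (2 * a * rho0) != 0 by apply: rc_neq0; rewrite !mulf_neq0 // gt_eqF.
rewrite /Aent -/(pz K M t b j e).
rewrite /pz in hp *.
field.
by rewrite hp hz hc.
Qed.

Lemma cexp0 (R : realType) (t a x : R) b :
  cexp (- sgb R b * Complex 0 t * rc (x / a)) = Complex (cos (t / a * x)) (- sgR R b * sin (t / a * x)).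
Proof.
have -> : - sgb R b * Complex 0 t * rc (x / a) = Complex 0 (- sgR R b * (t / a * x)).
  by case: b; apply/eqP; rewrite eq_complex /= /sgR; apply/andP; split; apply/eqP; ring.
rewrite /cexp /= expR0.
case: b; rewrite /sgR ?mulN1r ?mul1r ?cosN ?sinN ?opprK;
  apply/eqP; rewrite eq_complex /=; apply/andP; split; apply/eqP. all: rewrite ?mul1r ?mul0r ?subr0 ?addr0 ?mulr0 ?add0r //.
Qed.

Lemma sgR_neq0 (R : realType) b : sgR R b != 0.
Proof. by case: b; rewrite /sgR ?oppr_eq0 oner_eq0. Qed.

Lemma sgR_cases (R : realType) b : sgR R b = 1 \/ sgR R b = -1.
Proof. by case: b; [left|right]. Qed.

Lemma sgb_sq (R : realType) b : sgb R b * sgb R b = 1.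
Proof. by case: b; rewrite /sgb ?mulr1 ?mulrNN ?mulr1. Qed.

Lemma kapE (R : realType) b (c t S : R) :
  (- sgb R b * rc c) * (Complex 0 t * rc S) = Complex 0 (- (sgR R b * c * (t * S))).
Proof.
case: b; rewrite /sgb /sgR; apply/eqP; rewrite eq_complex /=; apply/andP; split; apply/eqP;
  rewrite ?mul1r ?mul0r ?subr0 ?addr0 ?mulr0 ?add0r ?mulN1r; ring.
Qed.

Lemma cj_real (R : realType) (x : R[i]) : complex.Im x = 0 -> cj x = x.
Proof. by case: x => p q /= ->; rewrite oppr0. Qed.

Lemma sum_delta (R : realType) (n : nat) (F : 'I_n -> R[i]) (j : 'I_n) :
  \sum_i F i * (j == i)%:R = F j.
Proof.
rewrite (bigD1 j) //= eqxx mulr1 big1 ?addr0 // => i hi.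
by rewrite eq_sym (negbTE hi) mulr0.
Qed.

Lemma det_H0 (R : realType) (n : nat) (s : 'I_n -> R) (a rho0 S : R) (K M : 'I_n -> R) (t : R) b :
  0 < a -> 0 < rho0 -> 0 < S -> t != 0 ->
  \det (Hm s a rho0 S K M t b 0) != 0.
Proof.
move=> ha hr hS ht; apply/negP => /eqP hd.
have : \det (Hm s a rho0 S K M t b 0)^T == 0 by rewrite det_tr hd.
case/det0P => u hu0 hu.
set q : R := - (sgR R b * (2 * a * rho0) * (t * S)).
have hq : q != 0.
  by rewrite /q oppr_eq0 !mulf_neq0 ?sgR_neq0 ?pnatr_eq0 ?(gt_eqF ha) ?(gt_eqF hr) ?(gt_eqF hS).
apply: (negP hu0); apply/eqP/rowP => j; rewrite mxE.
have hc : rc (2 * a * rho0) != 0.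
  by apply: rc_neq0; rewrite !mulf_neq0 ?pnatr_eq0 ?(gt_eqF ha) ?(gt_eqF hr).
apply: (@kernel R n s (t / a) (sgR R b) _ (fun i => pz K M t b i 0) _ (Complex 0 q) _ _ (fun i => u 0 i) _ j).
- exact: sgR_cases.
- move=> i; apply: cj_real; rewrite Im_pz; ring.
- by apply/eqP; rewrite eq_complex /= oppr0 !eqxx.
- by apply/eqP => -[] /eqP; rewrite (negbTE hq).
move=> {}j.
have := congr1 (fun A : 'rV[R[i]]_n => A 0 j) hu; rewrite !mxE => h0.
have h1 : \sum_i u 0 i * (Aent s a rho0 t b 0 j i * pz K M t b i 0)
          + (- zeta t b 0 * rc S) * u 0 j = 0.
  rewrite -[RHS]h0 -[X in _ + X](sum_delta (fun i => (- zeta t b 0 * rc S) * u 0 i) j) -big_split /=.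
  by apply: eq_bigr => i _; rewrite !mxE; ring.
have h2 : forall i, Complex (cos (t / a * `|s j - s i|)) (- sgR R b * sin (t / a * `|s j - s i|))
   * (pz K M t b i 0 * u 0 i) = (- sgb R b * rc (2 * a * rho0)) * (u 0 i * (Aent s a rho0 t b 0 j i * pz K M t b i 0)).
  move=> i; rewrite /Aent zetaE mulr0 -cexp0.
  transitivity ((sgb R b * sgb R b) * (rc (2 * a * rho0) / rc (2 * a * rho0)) *
     (cexp (- sgb R b * Complex 0 t * rc (`|s j - s i| / a)) * (pz K M t b i 0 * u 0 i))).
    by rewrite sgb_sq divff // !mul1r.
  by field.
rewrite (eq_bigr _ (fun i _ => h2 i)) -mulr_sumr.
have -> : \sum_i u 0 i * (Aent s a rho0 t b 0 j i * pz K M t b i 0) = zeta t b 0 * rc S * u 0 j.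
  by move: h1; rewrite !mulNr => /eqP; rewrite addr_eq0 opprK => /eqP.
by rewrite zetaE mulr0 mulrA kapE.
Qed.

Lemma cc_id0 (R : realType) : cc (fun e : R => rc e) (rc 0).
Proof.
apply: cc_Complex; last exact: cvg_cst.
by apply: cvg_at_right_filter; exact: cvg_id.
Qed.

Lemma cc_cexp (R : realType) (f : R -> R[i]) z : cc f z -> cc (fun e => cexp (f e)) (cexp z).
Proof.
move=> [h1 h2]; rewrite /cexp; apply: cc_mul; apply: cc_Complex.
- by apply: continuous_cvg => //; exact: continuous_expR.
- exact: cvg_cst.
- by apply: continuous_cvg => //; exact: continuous_cos.
- by apply: continuous_cvg => //; exact: continuous_sin.
Qed.

Lemma cc_exp2 (R : realType) (f : R -> R[i]) z : cc f z -> cc (fun e => f e ^+ 2) (z ^+ 2).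
Proof. by move=> h; rewrite expr2; apply: cc_ext (cc_mul h h) => e; rewrite expr2. Qed.

Lemma cc_zeta (R : realType) (t : R) b : cc (fun e => zeta t b e) (zeta t b 0).
Proof.
case: b; rewrite /zeta; apply: cc_add; try exact: cc_cst; try exact: cc_id0.
exact: cc_opp (cc_id0 R).
Qed.

Lemma cc_pz (R : realType) (n : nat) (K M : 'I_n -> R) t b j :
  cc (fun e => pz K M t b j e) (pz K M t b j 0).
Proof.
rewrite /pz; apply: cc_add; first exact: cc_cst.
apply: cc_mul; last exact: cc_cst.
exact: cc_exp2 (cc_zeta t b).
Qed.

Lemma cc_Aent (R : realType) (n : nat) (s : 'I_n -> R) (a rho0 t : R) b i j :
  cc (fun e => Aent s a rho0 t b e i j) (Aent s a rho0 t b 0 i j).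
Proof.
rewrite /Aent; apply: cc_mul; last exact: cc_cst.
apply: cc_mul; first exact: cc_cst.
apply: cc_cexp; apply: cc_mul; last exact: cc_cst.
apply: cc_mul; first exact: cc_cst.
exact: cc_zeta.
Qed.

Lemma cc_Hm (R : realType) (n : nat) (s : 'I_n -> R) (a rho0 S : R) (K M : 'I_n -> R) (t : R) b i j :
  cc (fun e => Hm s a rho0 S K M t b e i j) (Hm s a rho0 S K M t b 0 i j).
Proof.
have h := cc_add (cc_mul (cc_Aent s a rho0 t b i j) (cc_pz K M t b j))
   (cc_mul (cc_mul (cc_opp (cc_zeta t b)) (cc_cst (rc S))) (cc_cst ((i == j)%:R : R[i]))).
rewrite mxE; apply: cc_ext h => e; by rewrite mxE.
Qed.

Lemma inv_Gamma (R : realType) (n : nat) (s : 'I_n -> R) (a rho0 S : R) (K M : 'I_n -> R) (t : R) b e :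
  0 < a -> 0 < rho0 -> t != 0 -> (forall j, 0 < M j) -> 0 < e ->
  Hm s a rho0 S K M t b e \in unitmx ->
  Gamma s a rho0 S K M (zeta t b e) \in unitmx /\
  forall i j, invmx (Gamma s a rho0 S K M (zeta t b e)) i j =
     pz K M t b i e * ((\det (Hm s a rho0 S K M t b e))^-1 * \adj (Hm s a rho0 S K M t b e) i j).
Proof.
move=> ha hr ht hM he hU.
rewrite Gamma_Hm //.
set H := Hm s a rho0 S K M t b e.
set D := diag_mx (\row_j (pz K M t b j e)^-1).
set P := diag_mx (\row_j pz K M t b j e).
have DP : D *m P = 1%:M.
  apply/matrixP => i j; rewrite /D /P mul_diag_mx !mxE.
  case: (eqVneq i j) => [->|hij]; first by rewrite ?eqxx !mulr1n mulVf //; apply: pz_neq0.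
  by rewrite mulr0n mulr0.
have GY : H *m D *m (P *m invmx H) = 1%:M.
  by rewrite mulmxA -(mulmxA H) DP mulmx1 mulmxV.
have [GU _] := mulmx1_unit GY.
split => // i j.
have -> : invmx (H *m D) = P *m invmx H.
  by rewrite -[LHS]mulmx1 -GY (mulmxA (invmx (H *m D)) (H *m D) (P *m invmx H)) mulVmx // mul1mx.
by rewrite /P mul_diag_mx /invmx hU !mxE.
Qed.

Lemma cc_near (R : realType) (f g : R -> R[i]) z :
  (\forall e \near (0:R)^'+, f e = g e) -> cc g z -> cc f z.
Proof.
move=> hfg [h1 h2]; split.
  by apply: (cvg_trans _ h1); apply: near_eq_cvg; near=> e; rewrite (near hfg e).
by apply: (cvg_trans _ h2); apply: near_eq_cvg; near=> e; rewrite (near hfg e).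
Unshelve. all: by end_near.
Qed.

Lemma cc_eventually_neq0 (R : realType) (f : R -> R[i]) z :
  z != 0 -> cc f z -> \forall e \near (0:R)^'+, f e != 0.
Proof.
move=> hz [h1 h2].
case: (eqVneq (complex.Re z) 0) => hR.
  have hI : complex.Im z != 0.
    by apply: contra hz => /eqP hI; move: hR hI; clear h1 h2; case: z => p q /= -> ->.
  have nI := @cvgr_neq0 _ _ _ _ (at_right_proper_filter (0:R)) _ (complex.Im z) h2 hI.
  apply: (filterS _ nI) => e /= hIe; apply/eqP => he; move: hIe; rewrite he /=; by rewrite eqxx.
have nR := @cvgr_neq0 _ _ _ _ (at_right_proper_filter (0:R)) _ (complex.Re z) h1 hR.
apply: (filterS _ nR) => e /= hIe; apply/eqP => he; move: hIe; rewrite he /=; by rewrite eqxx.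
Qed.

Lemma side (R : realType) (n : nat) (s : 'I_n -> R) (a rho0 S : R) (K M : 'I_n -> R) (t : R) b :
  0 < a -> 0 < rho0 -> 0 < S -> t != 0 -> (forall j, 0 < M j) ->
  inv_limit_exists (fun e => Gamma s a rho0 S K M (zeta t b e)).
Proof.
move=> ha hr hS ht hM.
have d0 := det_H0 s K M b ha hr hS ht.
have ccdet := cc_det (cc_Hm s a rho0 S K M t b).
have nd := cc_eventually_neq0 d0 ccdet.
have key : \forall e \near (0:R)^'+,
   Gamma s a rho0 S K M (zeta t b e) \in unitmx /\
   forall i j, invmx (Gamma s a rho0 S K M (zeta t b e)) i j =
     pz K M t b i e * ((\det (Hm s a rho0 S K M t b e))^-1 * \adj (Hm s a rho0 S K M t b e) i j).
  near=> e; have e0 : 0 < e by near: e; exact: nbhs_right_gt.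
  apply: inv_Gamma => //.
  by rewrite unitmxE unitfE; near: e.
split.
  by apply: filterS key => e [].
exists (\matrix_(i, j) (pz K M t b i 0 *
   ((\det (Hm s a rho0 S K M t b 0))^-1 * \adj (Hm s a rho0 S K M t b 0) i j))) => i j.
rewrite mxE.
have hc : cc (fun e => pz K M t b i e * ((\det (Hm s a rho0 S K M t b e))^-1 * \adj (Hm s a rho0 S K M t b e) i j))
    (pz K M t b i 0 * ((\det (Hm s a rho0 S K M t b 0))^-1 * \adj (Hm s a rho0 S K M t b 0) i j)).
  apply: cc_mul; first exact: cc_pz.
  apply: cc_mul; first exact: cc_inv.
  exact: cc_adj (cc_Hm s a rho0 S K M t b) i j.
have := cc_near _ hc; apply.
by apply: filterS key => e [] _ ->.
Unshelve. all: by end_near.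
Qed.

Theorem mainTheorem2 (R : realType) (n : nat) (hn : (0 < n)%N)
  (s : 'I_n -> R) (hs : injective s) (a rho0 S : R) (K M : 'I_n -> R)
  (ha : 0 < a) (hrho0 : 0 < rho0) (hS : 0 < S)
  (hK : forall j, 0 < K j) (hM : forall j, 0 < M j)
  (t : R) (ht : t != 0) :
  let lambda : R[i] := Complex 0 t in
  inv_limit_exists (fun e : R => Gamma s a rho0 S K M (lambda + rc e)) /\
  inv_limit_exists (fun e : R => Gamma s a rho0 S K M (lambda - rc e)).
Proof.
move=> lambda; split.
  exact: (@side R n s a rho0 S K M t true ha hrho0 hS ht hM).
exact: (@side R n s a rho0 S K M t false ha hrho0 hS ht hM).
Qed.
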